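(* Let $S$ be a GCD closed set of positive integers with $n\ge 3$ elements. Then $i_+([S])\ge 1$ and $2\le i_-([S])\le n-1$.
   Context: $S$ is GCD closed if $\gcd(x,y)\in S$ for all $x,y\in S$. The LCM matrix $[S]$ of $S=\{x_1,\dots,x_n\}$ has $(i,j)$ entry $\mathrm{lcm}(x_i,x_j)$; $i_+(M)$ and $i_-(M)$ denote the numbers of positive and negative eigenvalues (with multiplicity) of a real symmetric matrix $M$. *)

(* Defs.v *)
From HB Require Import structures.
From mathcomp Require Import all_boot all_order all_algebra all_field.
Set Implicit Arguments. Unset Strict Implicit. Unset Printing Implicit Defensive.
Import Order.TTheory GRing.Theory Num.Theory.
Local Open Scope ring_scope.

(* Eigenvalues (with multiplicity) of a square complex-algebraic matrix:
   a sequence s of roots with char_poly A = \prod_(z <- s) ('X - z%:P)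
   (char_poly is monic, so lead_coef = 1); unique up to permutation. *)
Definition eigenvalues (n : nat) (A : 'M[algC]_n) : seq algC :=
  sval (closed_field_poly_normal (char_poly A)).

Definition i_pos (n : nat) (A : 'M[algC]_n) : nat :=
  count (fun z : algC => 0 < z) (eigenvalues A).
Definition i_neg (n : nat) (A : 'M[algC]_n) : nat :=
  count (fun z : algC => z < 0) (eigenvalues A).

Definition gcd_closed (s : seq nat) : Prop :=
  forall x y, x \in s -> y \in s -> gcdn x y \in s.

Definition lcm_mx (s : seq nat) : 'M[algC]_(size s) :=
  \matrix_(i < size s, j < size s) (lcmn (nth 0%N s i) (nth 0%N s j))%:R.

(* Main.v *)
Require Import Defs.
From mathcomp Require Import all_boot all_order all_algebra all_field.
From mathcomp Require Import zify ring.
Set Implicit Arguments. Unset Strict Implicit. Unset Printing Implicit Defensive.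
Import Order.TTheory GRing.Theory Num.Theory Num.Def.
Lemma choose3 (s : seq nat) : uniq s -> (forall x, x \in s -> (0 < x)%N) ->
  gcd_closed s -> (3 <= size s)%N ->
  exists m a b, [/\ m \in s, a \in s, b \in s, (m < a)%N & (a < b)%N] /\
    [/\ (m %| a)%N, (m %| b)%N & (a %| b)%N || (gcdn a b == m)].
Proof.
move=> Hu Hp Hg Hn.
set t := sort leq s.
have Ht : sorted ltn t by rewrite ltn_sorted_uniq_leq sort_uniq Hu sort_sorted //; exact: leq_total.
have Hsz : size t = size s by rewrite size_sort.
have Hmem : t =i s by exact: mem_sort.
have lt_t : forall i j, (i < j)%N -> (j < size t)%N -> ((nth 0 t i) < (nth 0 t j))%N.
  move=> i j ij js; apply: (sorted_ltn_nth ltn_trans 0 Ht) => //; rewrite inE //.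
  exact: ltn_trans ij js.
have mem_t : forall i, (i < size t)%N -> (nth 0 t i) \in s by move=> i Hi; rewrite -Hmem mem_nth.
set m := (nth 0 t 0); set a := (nth 0 t 1); set b := (nth 0 t 2).
have Hm : m \in s by apply: mem_t; rewrite Hsz; lia.
have Ha : a \in s by apply: mem_t; rewrite Hsz; lia.
have Hb : b \in s by apply: mem_t; rewrite Hsz; lia.
have ma : (m < a)%N by apply: lt_t; rewrite ?Hsz; lia.
have ab : (a < b)%N by apply: lt_t; rewrite ?Hsz; lia.
have ix : forall x, x \in s -> x = (nth 0 t )(index x t) /\ (index x t < size t)%N.
  by move=> x Hx; rewrite nth_index ?Hmem // index_mem Hmem.
have minm : forall x, x \in s -> (m <= x)%N.
  move=> x /ix [Ex Hi]; rewrite Ex; case E: (index x t) => [|i]; first by [].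
  by apply: ltnW; apply: lt_t => //; rewrite -E.
have dvm : forall x, x \in s -> m %| x.
  move=> x Hx; have Hgs := Hg _ _ Hm Hx.
  have h1 := minm _ Hgs.
  have h2 : (gcdn m x <= m)%N by apply: dvdn_leq; [exact: Hp | exact: dvdn_gcdl].
  have -> : m = gcdn m x by apply/eqP; rewrite eqn_leq h1 h2.
  exact: dvdn_gcdr.
have small : forall x, x \in s -> (x <= a)%N -> x = m \/ x = a.
  move=> x /ix [Ex Hi] xa; move: Ex xa Hi; case E: (index x t) => [|[|i]] Ex xa Hi.
  - by left.
  - by right.
  - have := lt_t 1%N i.+2 isT Hi; rewrite -Ex; lia.
exists m, a, b; split; first by split.
split; [exact: dvm | exact: dvm |].
have Hgs := Hg _ _ Ha Hb.
have : (gcdn a b <= a)%N by apply: dvdn_leq; [exact: Hp | exact: dvdn_gcdl].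
case/(small _ Hgs) => E; first by rewrite E eqxx orbT.
apply/orP; left; rewrite -E; exact: dvdn_gcdr.
Qed.

Local Open Scope ring_scope.

Definition bil n (A : 'M[algC]_n) (x y : 'rV[algC]_n) : algC := (x *m A *m y^T) 0 0.

Lemma bil_delta n (A : 'M[algC]_n) (i j : 'I_n) : bil A (delta_mx 0 i) (delta_mx 0 j) = A i j.
Proof. by rewrite /bil trmx_delta -rowE -colE !mxE. Qed.

Lemma bilDl n (A : 'M[algC]_n) x1 x2 y : bil A (x1 + x2) y = bil A x1 y + bil A x2 y.
Proof. by rewrite /bil !mulmxDl mxE. Qed.
Lemma bilZl n (A : 'M[algC]_n) c x y : bil A (c *: x) y = c * bil A x y.
Proof. by rewrite /bil -!scalemxAl mxE. Qed.
Lemma bilDr n (A : 'M[algC]_n) x y1 y2 : bil A x (y1 + y2) = bil A x y1 + bil A x y2.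
Proof. by rewrite /bil linearD /= mulmxDr mxE. Qed.
Lemma bilZr n (A : 'M[algC]_n) c x y : bil A x (c *: y) = c * bil A x y.
Proof. by rewrite /bil linearZ /= -scalemxAr mxE. Qed.

Lemma char_poly_sim n (P D : 'M[algC]_n) : P \in unitmx ->
  char_poly (invmx P *m D *m P) = char_poly D.
Proof.
move=> Pu; rewrite /char_poly /char_poly_mx.
have -> : 'X%:M - map_mx polyC (invmx P *m D *m P) =
   map_mx polyC (invmx P) *m ('X%:M - map_mx polyC D) *m map_mx polyC P.
  rewrite mulmxBr mulmxBl !map_mxM; congr (_ - _).
  rewrite mul_mx_scalar -scalemxAl -map_mxM mulVmx // map_mx1.
  by rewrite scalemx1.
rewrite !det_mulmx mulrC mulrA -det_mulmx -map_mxM mulmxV // map_mx1 det1 mul1r.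
by [].
Qed.

Lemma eig_perm n (A P : 'M[algC]_n) (d : 'rV_n) : P \in unitmx ->
  A = invmx P *m diag_mx d *m P ->
  perm_eq (eigenvalues A) [seq d 0 i | i <- enum 'I_n].
Proof.
move=> Pu HA; apply: prod_XsubC_eq.
rewrite /eigenvalues; case: closed_field_poly_normal => r /= Hr.
rewrite -[X in X = _]scale1r -(monicP (char_poly_monic A)) -Hr HA char_poly_sim //.
rewrite char_poly_trig ?diag_mx_is_trig // big_map big_enum /=.
by apply: eq_bigr => i _; rewrite mxE eqxx mulr1n.
Qed.

Lemma q_formula n (A P : 'M[algC]_n) (d : 'rV_n) : P \is unitarymx ->
  A = invmx P *m diag_mx d *m P -> forall x,
  bil A x (map_mx conjC x) =
  \sum_i d 0 i * ((x *m invmx P) 0 i * ((x *m invmx P) 0 i)^*).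
Proof.
move=> Pu HA x; set w := x *m invmx P.
have Hw : P *m (map_mx conjC x)^T = (map_mx conjC w)^T.
  rewrite /w invmx_unitary // map_mxM map_trmx -map_mx_comp.
  by rewrite (map_mx_id (@conjCK _)) trmx_mul trmxK map_trmx.
rewrite /bil HA !mulmxA -/w -mulmxA Hw mxE.
apply: eq_bigr => i _; rewrite mul_mx_diag !mxE; ring.
Qed.

Lemma cnt_ord n (p : pred 'I_n) : count p (enum 'I_n) = #|p|.
Proof. by rewrite enumT cardE /enum_mem size_filter. Qed.

Lemma main_abstract n (A : 'M[algC]_n) (HA : A \is hermsymmx) :
  [/\ (forall u : 'rV_n, map_mx conjC u = u -> 0 < bil A u u -> (1 <= i_pos A)%N),
      (forall u v : 'rV_n, map_mx conjC u = u -> map_mx conjC v = v ->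
         bil A u u < 0 -> bil A v v < 0 -> bil A u v = 0 -> bil A v u = 0 ->
         (2 <= i_neg A)%N)
    & (i_pos A + i_neg A <= n)%N].
Proof.
have HAeq : A = invmx (spectralmx A) *m diag_mx (spectral_diag A) *m spectralmx A.
  by apply/orthomx_spectralP; apply: hermitian_normalmx.
have Hreal : forall i, spectral_diag A 0 i \is Num.real.
  by move=> i; apply: (mxOverP (hermitian_spectral_diag_real HA)).
move: HAeq Hreal; set P := spectralmx A; set d := spectral_diag A => HAeq Hreal.
have Pu : P \is unitarymx := spectral_unitarymx A.
have Pinv : P \in unitmx := unitarymx_unit Pu.
have Hperm := eig_perm Pinv HAeq.
have Hcnt : forall p : pred algC,
    count p (eigenvalues A) = #|[pred i : 'I_n | p (d 0 i)]|.
  by move=> p; rewrite (permP Hperm) count_map cnt_ord.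
have Hq := q_formula Pu HAeq.
split.
- move=> u Hu Hpos; rewrite /i_pos Hcnt; apply/card_gt0P.
  case: (pickP [pred i : 'I_n | 0 < d 0 i]) => [i Hi|H]; first by exists i.
  exfalso; have Hle : bil A u (map_mx conjC u) <= 0.
    rewrite Hq; apply: sumr_le0 => i _; apply: mulr_le0_ge0; last exact: mul_conjC_ge0.
    by rewrite real_leNgt ?real0 //; move: (H i) => /= ->.
  by move: Hpos; rewrite -{2}Hu => /lt_geF; rewrite Hle.
- move=> u v Hu Hv Huu Hvv Huv Hvu; rewrite /i_neg Hcnt.
  case: (leqP 2 #|[pred i : 'I_n | d 0 i < 0]|) => // Hlt; exfalso.
  have nonneg : forall x, (forall i, ~~ (d 0 i < 0) \/ (x *m invmx P) 0 i = 0) ->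
      0 <= bil A x (map_mx conjC x).
    move=> x Hx; rewrite Hq; apply: sumr_ge0 => i _.
    case: (Hx i) => [Hi|->]; last by rewrite mul0r mulr0.
    apply: mulr_ge0; last exact: mul_conjC_ge0.
    by rewrite real_leNgt ?real0.
  case: (pickP [pred i : 'I_n | d 0 i < 0]) => [k Hk|H]; last first.
    have := nonneg u (fun i => or_introl (negbT (H i))).
    by rewrite Hu lt_geF.
  have Hk' : forall i, i != k -> ~~ (d 0 i < 0).
    move=> i Hik; apply/negP => Hi; move: Hlt; rewrite ltnS leqNgt.
    by move/negP; apply; apply/card_gt1P; exists i, k.
  set wu := (u *m invmx P) 0 k; set wv := (v *m invmx P) 0 k.
  have gen : forall x, (x *m invmx P) 0 k = 0 -> 0 <= bil A x (map_mx conjC x).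
    move=> x Hx0; apply: nonneg => i; case: (eqVneq i k) => [->|ne]; first by right.
    by left; apply: Hk'.
  case: (eqVneq wu 0) => [wu0|wun0].
    by have := gen u wu0; rewrite Hu lt_geF.
  pose x := wv *: u + (- wu) *: v.
  have Hx0 : (x *m invmx P) 0 k = 0.
    rewrite /x mulmxDl -!scalemxAl; rewrite /wu /wv; set Mu := u *m invmx P; set Mv := v *m invmx P; rewrite !mxE; ring.
  have := gen x Hx0.
  rewrite /x map_mxD !map_mxZ Hu Hv !bilDl !bilZl !bilDr !bilZr Huv Hvu !mulr0 !addr0 add0r.
  rewrite lt_geF //.
  rewrite -[0]addr0; apply: ler_ltD.
    rewrite mulrA; apply: mulr_ge0_le0; [exact: mul_conjC_ge0 | exact: ltW].
  rewrite mulrA pmulr_rlt0 //; by rewrite mul_conjC_gt0 oppr_eq0.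
- rewrite /i_pos /i_neg -count_predUI.
  have -> : count (predI (fun z : algC => 0 < z) (fun z => z < 0)) (eigenvalues A) = 0%N.
    by apply/eqP; rewrite -leqn0 leqNgt -has_count; apply/hasP => -[z _ /= H]; rewrite lt_asym in H.
  rewrite addn0 (leq_trans (count_size _ _)) // (perm_size Hperm) size_map size_enum_ord //.
Qed.

Lemma bilNl n (A : 'M[algC]_n) x y : bil A (- x) y = - bil A x y.
Proof. by rewrite /bil !mulNmx mxE. Qed.
Lemma bilNr n (A : 'M[algC]_n) x y : bil A x (- y) = - bil A x y.
Proof. by rewrite /bil linearN /= mulmxN mxE. Qed.

Definition vec2 n (i j : 'I_n) (c1 c2 : nat) : 'rV[algC]_n :=
  c1%:R *: delta_mx 0 i - c2%:R *: delta_mx 0 j.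

Lemma conj_delta n (i : 'I_n) : map_mx conjC (delta_mx 0 i : 'rV[algC]_n) = delta_mx 0 i.
Proof. by apply/matrixP => a b; rewrite !mxE conjC_nat. Qed.

Lemma conj_vec2 n (i j : 'I_n) c1 c2 : map_mx conjC (vec2 i j c1 c2) = vec2 i j c1 c2.
Proof. by apply/matrixP => a b; rewrite !mxE rmorphB !rmorphM /= !conjC_nat. Qed.

Lemma lcm_herm s : lcm_mx s \is hermsymmx.
Proof.
apply/is_hermitianmxP; rewrite expr0 scale1r; apply/matrixP => i j.
by rewrite !mxE conjC_nat lcmnC.
Qed.

Lemma bil_vec2 s (i j k l : 'I_(size s)) c1 c2 c3 c4 :
  let L := fun (p q : 'I_(size s)) => lcmn (nth 0%N s p) (nth 0%N s q) in
  bil (lcm_mx s) (vec2 i j c1 c2) (vec2 k l c3 c4) =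
  (c1 * c3 * L i k + c2 * c4 * L j l)%:R - (c1 * c4 * L i l + c2 * c3 * L j k)%:R.
Proof.
move=> L; rewrite /vec2 !(bilDl, bilDr, bilNl, bilNr, bilZl, bilZr) !bil_delta.
rewrite !mxE /L !natrD !natrM; ring.
Qed.

Lemma ord_of s x : x \in s -> exists i : 'I_(size s), nth 0%N s i = x.
Proof.
move=> Hx; have Hi : (index x s < size s)%N by rewrite index_mem.
by exists (Ordinal Hi); rewrite /= nth_index.
Qed.

Theorem theorem5p2 (s : seq nat) (Hu : uniq s)
  (Hpos : forall x, x \in s -> (0 < x)%N) (Hg : gcd_closed s)
  (Hn : (3 <= size s)%N) :
  (1 <= i_pos (lcm_mx s))%N /\ (2 <= i_neg (lcm_mx s) <= (size s).-1)%N.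
Proof.
have [H1 H2 H3] := main_abstract (lcm_herm s).
have [m [a [b [[Hm Ha Hb ma ab] [dma dmb cab]]]]] := choose3 Hu Hpos Hg Hn.
have [im Eim] := ord_of Hm; have [ia Eia] := ord_of Ha; have [ib Eib] := ord_of Hb.
have m0 := Hpos _ Hm.
have Lid : forall x, lcmn x x = x by move=> x; apply/lcmn_idPr.
have Lma : lcmn m a = a by apply/lcmn_idPr.
have Lam : lcmn a m = a by rewrite lcmnC.
have Lmb : lcmn m b = b by apply/lcmn_idPr.
have Lbm : lcmn b m = b by rewrite lcmnC.
have Hpi : (1 <= i_pos (lcm_mx s))%N.
  apply: (H1 (delta_mx 0 im)); first exact: conj_delta.
  by rewrite bil_delta mxE ltr0n lcmn_gt0 Eim m0.
split => //.
have Hn2 : (2 <= i_neg (lcm_mx s))%N.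
  pose u := vec2 ia im m a.
  have Huu : bil (lcm_mx s) u u < 0.
    rewrite bil_vec2 /= Eim Eia ?Lid ?Lma ?Lam subr_lt0 ltr_nat; nia.
  case/orP: cab => [dab | /eqP gab].
  - have Lab : lcmn a b = b by apply/lcmn_idPr.
    have Lba : lcmn b a = b by rewrite lcmnC.
    pose v := vec2 ib ia a b.
    apply: (H2 u v); rewrite ?conj_vec2 //.
    + rewrite bil_vec2 /= Eib Eia ?Lid ?Lab ?Lba subr_lt0 ltr_nat; nia.
    + by apply/eqP; rewrite bil_vec2 /= Eib Eia Eim ?Lid ?Lab ?Lba ?Lma ?Lam ?Lmb ?Lbm subr_eq0 eqr_nat; apply/eqP; nia.
    + by apply/eqP; rewrite bil_vec2 /= Eib Eia Eim ?Lid ?Lab ?Lba ?Lma ?Lam ?Lmb ?Lbm subr_eq0 eqr_nat; apply/eqP; nia.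
  - have HL := muln_lcm_gcd a b; rewrite gab in HL.
    have HL' : lcmn b a = lcmn a b by rewrite lcmnC.
    pose v := vec2 ib im m b.
    apply: (H2 u v); rewrite ?conj_vec2 //.
    + rewrite bil_vec2 /= Eib Eim ?Lid ?Lmb ?Lbm subr_lt0 ltr_nat; nia.
    + by apply/eqP; rewrite bil_vec2 /= Eib Eia Eim ?Lid ?HL' ?Lma ?Lam ?Lmb ?Lbm subr_eq0 eqr_nat; apply/eqP; nia.
    + by apply/eqP; rewrite bil_vec2 /= Eib Eia Eim ?Lid ?HL' ?Lma ?Lam ?Lmb ?Lbm subr_eq0 eqr_nat; apply/eqP; nia.
rewrite Hn2 /=; move: H3 Hpi; lia.
Qed.
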